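(* Let $\mathcal{X}\subseteq\mathbb{R}^n$ be a nonempty closed convex set with Euclidean projection $\Pi_{\mathcal{X}}$, let $\Theta\subseteq\mathbb{R}^m$, and let $f:\mathbb{R}^n\times\mathbb{R}^m\to\mathbb{R}$ be differentiable and convex in its first argument. Assume: (A1) there is $G>0$ with $|f(x,\theta)-f(y,\theta)|\le G\|x-y\|$ for all $x,y\in\mathcal{X}$, $\theta\in\Theta$; (A2) there is $L>0$ with $f(y,\theta)\le f(x,\theta)+\nabla_x f(x,\theta)^T(y-x)+\frac{L}{2}\|y-x\|^2$ for all $x,y\in\mathcal{X}$, $\theta\in\Theta$; (A3) there is $\lambda>0$ with $f(y,\theta)\ge f(x,\theta)+\nabla_x f(x,\theta)^T(y-x)+\frac{\lambda}{2}\|y-x\|^2$ for all $x,y\in\mathcal{X}$, $\theta\in\Theta$; (A4) there is $C_\theta>0$ with $\|\nabla_x f(x,\theta_1)-\nabla_x f(x,\theta_2)\|\le C_\theta\|\theta_1-\theta_2\|$ for all $x\in\mathcal{X}$, $\theta_1,\theta_2\in\Theta$. Let $\theta_1,\dots,\theta_T\in\Theta$ and, for $t=2,\dots,T$, let $\hat\theta_t\in\Theta$ be a prediction of $\theta_t$ made from $\theta_1,\dots,\theta_{t-1}$. Fix an integer $k\ge1$, $\eta>0$, $x_1\in\mathcal{X}$, and for $t=1,\dots,T-1$ define $x_{t+1}$ by performing $k$ predicted projected gradient steps: $z^0=x_t$, $z^{j}=\Pi_{\mathcal{X}}\big(z^{j-1}-\eta\nabla_x f(z^{j-1},\hat\theta_{t+1})\big)$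 for $j=1,\dots,k$, and $x_{t+1}=z^k$. If $\eta\le 1/L$, then with $C_{\eta,\lambda}=\sqrt{1-\frac{2\lambda\eta}{1+\eta\lambda}}$, $$\mathbf{Reg}_D(\{x_t\})\le \frac{G\|x_1-x_1^\ast\|}{1-C_{\eta,\lambda}^k}+\frac{G\,C_{\eta,\lambda}^k}{1-C_{\eta,\lambda}^k}\mathcal{P}^\ast+\frac{G\eta C_\theta}{1-C_{\eta,\lambda}}P^\theta .$$
   Context: Write $x_t^\ast=\arg\min_{x\in\mathcal{X}}f(x,\theta_t)$. The dynamic regret is $\mathbf{Reg}_D(\{x_t\})=\sum_{t=1}^T\big(f(x_t,\theta_t)-\min_{x\in\mathcal{X}}f(x,\theta_t)\big)$. The path length is $\mathcal{P}^\ast=\sum_{t=1}^{T-1}\|x_t^\ast-x_{t+1}^\ast\|$, and the parameter prediction regularity is $P^\theta=\sum_{t=2}^T\|\theta_t-\hat\theta_t\|$. All norms are Euclidean. *)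

(* Defs.v *)
From HB Require Import structures.
From mathcomp Require Import all_boot all_order all_algebra.
From mathcomp Require Import all_classical all_reals all_analysis.
Set Implicit Arguments. Unset Strict Implicit. Unset Printing Implicit Defensive.
Import Order.TTheory GRing.Theory Num.Theory.
Import numFieldNormedType.Exports.
Local Open Scope classical_set_scope.
Local Open Scope ring_scope.

Definition dotv {R : realType} {n : nat} (u v : 'rV[R]_n) : R :=
  \sum_(i < n) u ord0 i * v ord0 i.
Definition enorm {R : realType} {n : nat} (u : 'rV[R]_n) : R :=
  Num.sqrt (dotv u u).

Definition is_convex_set {R : realType} {n : nat} (X : set 'rV[R]_n) : Prop :=
  forall x y (a : R), X x -> X y -> 0 <= a <= 1 -> X (a *: x + (1 - a) *: y).

Definition is_euclid_proj {R : realType} {n : nat} (X : set 'rV[R]_n)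
  (proj : 'rV[R]_n -> 'rV[R]_n) : Prop :=
  forall y, X (proj y) /\ forall x, X x -> enorm (y - proj y) <= enorm (y - x).

Definition pgd_step {R : realType} {n m : nat} (proj : 'rV[R]_n -> 'rV[R]_n)
  (grad : 'rV[R]_n -> 'rV[R]_m -> 'rV[R]_n) (eta : R) (th : 'rV[R]_m)
  (z : 'rV[R]_n) : 'rV[R]_n :=
  proj (z - eta *: grad z th).

(* Iterates x_t (t >= 1): x_1 = x1, x_{t+1} = (k steps with thhat_{t+1}) x_t.
   Index 0 is unused (set to x1). *)
Fixpoint iterates {R : realType} {n m : nat} (proj : 'rV[R]_n -> 'rV[R]_n)
  (grad : 'rV[R]_n -> 'rV[R]_m -> 'rV[R]_n) (eta : R) (k : nat)
  (thhat : nat -> 'rV[R]_m) (x1 : 'rV[R]_n) (t : nat) : 'rV[R]_n :=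
  match t with
  | 0 | 1 => x1
  | t'.+1 => iter k (pgd_step proj grad eta (thhat t)) (iterates proj grad eta k thhat x1 t')
  end.

(* Main.v *)
Require Import Defs.
From HB Require Import structures.
From mathcomp Require Import all_boot all_order all_algebra.
From mathcomp Require Import all_classical all_reals all_analysis.
From mathcomp Require Import ring lra.
Import Order.TTheory GRing.Theory Num.Theory.
Import numFieldNormedType.Exports.
Local Open Scope classical_set_scope.
Local Open Scope ring_scope.

Section Vec.
Context {R : realType} {n : nat}.
Implicit Types u v w : 'rV[R]_n.

Lemma dotvC u v : dotv u v = dotv v u.
Proof. by rewrite /dotv; apply: eq_bigr => i _; rewrite mulrC. Qed.
Lemma dotvDl u v w : dotv (u + v) w = dotv u w + dotv v w.
Proof. by rewrite /dotv -big_split; apply: eq_bigr => i _; rewrite mxE mulrDl. Qed.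
Lemma dotvNl u v : dotv (- u) v = - dotv u v.
Proof. by rewrite /dotv -sumrN; apply: eq_bigr => i _; rewrite mxE mulNr. Qed.
Lemma dotvZl a u v : dotv (a *: u) v = a * dotv u v.
Proof. by rewrite /dotv mulr_sumr; apply: eq_bigr => i _; rewrite mxE mulrA. Qed.
Lemma dotvBl u v w : dotv (u - v) w = dotv u w - dotv v w.
Proof. by rewrite dotvDl dotvNl. Qed.
Lemma dotvDr u v w : dotv w (u + v) = dotv w u + dotv w v.
Proof. by rewrite dotvC dotvDl !(dotvC w). Qed.
Lemma dotvBr u v w : dotv w (u - v) = dotv w u - dotv w v.
Proof. by rewrite dotvC dotvBl !(dotvC w). Qed.
Lemma dotvZr a u v : dotv v (a *: u) = a * dotv v u.
Proof. by rewrite dotvC dotvZl dotvC. Qed.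
Lemma dotvNr u v : dotv v (- u) = - dotv v u.
Proof. by rewrite dotvC dotvNl dotvC. Qed.
Lemma dotv_ge0 u : 0 <= dotv u u.
Proof. by apply: sumr_ge0 => i _; rewrite -expr2 sqr_ge0. Qed.
Lemma enorm_ge0 u : 0 <= enorm u.
Proof. exact: sqrtr_ge0. Qed.
Lemma enorm2 u : enorm u ^+ 2 = dotv u u.
Proof. by rewrite sqr_sqrtr // dotv_ge0. Qed.
Lemma enorm0_dot u v : enorm u = 0 -> dotv u v = 0.
Proof.
move=> h; have h2 : dotv u u = 0 by rewrite -enorm2 h expr2 mulr0.
rewrite /dotv big1 // => i _.
have /eqP : u ord0 i * u ord0 i = 0.
  apply: (@psumr_eq0P R _ xpredT (fun i => u ord0 i * u ord0 i)) => //.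
  by move=> j _; rewrite -expr2 sqr_ge0.
by rewrite mulf_eq0 orbb => /eqP ->; rewrite mul0r.
Qed.
Lemma cauchy_schwarz u v : dotv u v <= enorm u * enorm v.
Proof.
set a := enorm u; set b := enorm v.
have ha : 0 <= a := enorm_ge0 u. have hb : 0 <= b := enorm_ge0 v.
have [a0|apos] := eqVneq a 0; first by rewrite enorm0_dot // a0 mul0r.
have [b0|bpos] := eqVneq b 0; first by rewrite dotvC enorm0_dot // b0 mulr0.
have := dotv_ge0 (b *: u - a *: v).
rewrite !(dotvBl, dotvBr, dotvZl, dotvZr) -!enorm2 (dotvC v u) -/a -/b => H.
have hab : 0 < a * b by rewrite mulr_gt0 // lt0r ?apos ?bpos.
nra.
Qed.
Lemma enorm_tri u v : enorm (u + v) <= enorm u + enorm v.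
Proof.
rewrite -(@ler_pXn2r R 2) // ?nnegrE ?addr_ge0 ?enorm_ge0 //.
rewrite enorm2 dotvDl !dotvDr (dotvC v u) -!enorm2.
have := cauchy_schwarz u v; nra.
Qed.
Lemma enormZ a u : 0 <= a -> enorm (a *: u) = a * enorm u.
Proof.
move=> ha; rewrite /enorm dotvZl dotvZr mulrA sqrtrM ?mulr_ge0 //.
by rewrite -expr2 sqrtr_sqr ger0_norm.
Qed.
Lemma enormN u : enorm (- u) = enorm u.
Proof. by rewrite /enorm dotvNl dotvNr opprK. Qed.
End Vec.

Lemma small_a {R : realType} (D M : R) : 0 <= M ->
  (forall a, 0 < a <= 1 -> 0 <= a * D + a ^+ 2 * M) -> 0 <= D.
Proof.
move=> hM H; rewrite leNgt; apply/negP => hD.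
have hMD : 0 < M - D by lra.
set a := - D / (M - D).
have ha0 : 0 < a by rewrite divr_gt0 // oppr_gt0.
have ha1 : a <= 1 by rewrite ler_pdivrMr // mul1r; lra.
have ha : a * (M - D) = - D by rewrite /a divfK // gt_eqF.
have := H a; rewrite ha0 ha1 => /(_ isT).
have -> : a * D + a ^+ 2 * M = a ^+ 2 * D.
  have hM' : a * M = - D + a * D by rewrite -ha; ring.
  by rewrite expr2 -mulrA hM'; ring.
rewrite pmulr_rge0 ?exprn_gt0 //; lra.
Qed.

Lemma enorm_le_sq {R : realType} {n : nat} (u v : 'rV[R]_n) :
  enorm u <= enorm v -> dotv u u <= dotv v v.
Proof.
by move=> h; rewrite -!enorm2 (@ler_pXn2r R 2) // ?nnegrE ?enorm_ge0.
Qed.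

Lemma dot_sub_scale {R : realType} {n : nat} (u v : 'rV[R]_n) a :
  dotv (u - a *: v) (u - a *: v) = dotv u u - 2 * a * dotv u v + a ^+ 2 * dotv v v.
Proof. rewrite !(dotvBl, dotvBr, dotvZl, dotvZr) (dotvC v u); ring. Qed.

Lemma dot_sub {R : realType} {n : nat} (u v : 'rV[R]_n) :
  dotv (u - v) (u - v) = dotv u u - 2 * dotv u v + dotv v v.
Proof. rewrite !(dotvBl, dotvBr) (dotvC v u); ring. Qed.

Lemma proj_vi {R : realType} {n : nat} (X : set 'rV[R]_n) proj :
  is_convex_set X -> is_euclid_proj X proj ->
  forall w y, X y -> dotv (w - proj w) (y - proj w) <= 0.
Proof.
move=> cX hP w y Xy; have [Xp Hp] := hP w.
suff : 0 <= - 2 * dotv (w - proj w) (y - proj w) by nra.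
apply: (small_a _ _ (dotv_ge0 (y - proj w))) => a /andP[a0 a1].
have Xz : X (a *: y + (1 - a) *: proj w) by apply: cX => //; rewrite (ltW a0) a1.
have := enorm_le_sq _ _ (Hp _ Xz).
have -> : w - (a *: y + (1 - a) *: proj w) = (w - proj w) - a *: (y - proj w).
  by apply/rowP => i; rewrite !mxE; ring.
rewrite dot_sub_scale; nra.
Qed.

Lemma proj_nonexp {R : realType} {n : nat} (X : set 'rV[R]_n) proj :
  is_convex_set X -> is_euclid_proj X proj ->
  forall a b, enorm (proj a - proj b) <= enorm (a - b).
Proof.
move=> cX hP a b.
have h1 := proj_vi _ _ cX hP a _ (proj1 (hP b)).
have h2 := proj_vi _ _ cX hP b _ (proj1 (hP a)).
set p := proj a in h1 h2 *; set q := proj b in h1 h2 *.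
have e1 : q - p = - (p - q) by rewrite opprB.
rewrite e1 dotvNr in h1.
have ee : a - b = (a - p) - (b - q) + (p - q) by apply/rowP => i; rewrite !mxE; ring.
have hed : dotv (a - b) (p - q) = dotv (a - p) (p - q) - dotv (b - q) (p - q) + dotv (p - q) (p - q).
  by rewrite {1}ee dotvDl dotvBl.
have h3 := dotv_ge0 ((a - b) - (p - q)).
rewrite dot_sub in h3.
rewrite /enorm ler_sqrt ?dotv_ge0 //; lra.
Qed.

Lemma sqrt_bound {R : realType} (vv uu c : R) :
  0 <= vv -> 0 <= uu -> vv <= c * uu -> Num.sqrt vv <= Num.sqrt c * Num.sqrt uu.
Proof.
move=> hv hu h; have [hc|hc] := leP 0 c.
  by rewrite -sqrtrM // ler_sqrt // mulr_ge0.
have -> : vv = 0 by nra.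
by rewrite sqrtr0 mulr_ge0 ?sqrtr_ge0.
Qed.

Lemma opt_first {R : realType} {n m : nat} (X : set 'rV[R]_n) (Theta : set 'rV[R]_m)
  (f : 'rV[R]_n -> 'rV[R]_m -> R) grad (L : R) p xs y :
  is_convex_set X -> 0 < L ->
  (forall x y p, X x -> X y -> Theta p ->
     f y p <= f x p + dotv (grad x p) (y - x) + L / 2 * enorm (y - x) ^+ 2) ->
  Theta p -> X xs -> (forall x, X x -> f xs p <= f x p) -> X y ->
  0 <= dotv (grad xs p) (y - xs).
Proof.
move=> cX L0 A2 Tp Xxs hmin Xy.
apply: (small_a _ (L / 2 * dotv (y - xs) (y - xs))).
  by rewrite mulr_ge0 ?dotv_ge0 // divr_ge0 // ltW.
move=> a /andP[a0 a1].
have Xz : X (a *: y + (1 - a) *: xs) by apply: cX => //; rewrite (ltW a0) a1.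
have := A2 _ _ _ Xxs Xz Tp.
have := hmin _ Xz.
have -> : a *: y + (1 - a) *: xs - xs = a *: (y - xs).
  by apply/rowP => i; rewrite !mxE; ring.
rewrite enorm2 dotvZl dotvZr dotvZr.
set D := dotv _ (y - xs); set Q := dotv (y - xs) _.
move=> h1 h2.
have : 0 <= a * D + L / 2 * (a * (a * Q)) by lra.
by rewrite expr2; congr (_ <= _); ring.
Qed.

Lemma contract {R : realType} {n m : nat} (X : set 'rV[R]_n) (Theta : set 'rV[R]_m)
  (proj : 'rV[R]_n -> 'rV[R]_n)
  (f : 'rV[R]_n -> 'rV[R]_m -> R) grad (L lam eta : R) p xs z :
  is_convex_set X -> is_euclid_proj X proj -> 0 < L ->
  (forall x y p, X x -> X y -> Theta p ->
     f y p <= f x p + dotv (grad x p) (y - x) + L / 2 * enorm (y - x) ^+ 2) ->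
  0 < lam -> (forall x y p, X x -> X y -> Theta p ->
     f x p + dotv (grad x p) (y - x) + lam / 2 * enorm (y - x) ^+ 2 <= f y p) ->
  0 < eta -> eta <= 1 / L ->
  Theta p -> X xs -> (forall x, X x -> f xs p <= f x p) -> X z ->
  enorm (proj (z - eta *: grad z p) - xs)
    <= Num.sqrt (1 - 2 * lam * eta / (1 + eta * lam)) * enorm (z - xs).
Proof.
move=> cX hP L0 A2 lam0 A3 eta0 etaL Tp Xxs hmin Xz.
set y := proj (z - eta *: grad z p).
have Xy : X y := proj1 (hP _).
have h1 := A2 _ _ _ Xz Xy Tp.
have h2 := A3 _ _ _ Xz Xxs Tp.
have h3 := A3 _ _ _ Xxs Xy Tp.
have h4 := opt_first _ _ _ _ _ _ _ _ cX L0 A2 Tp Xxs hmin Xy.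
have h5 := proj_vi _ _ cX hP (z - eta *: grad z p) _ Xxs.
rewrite -/y in h5.
have e1 : y - z = (y - xs) - (z - xs) by apply/rowP => i; rewrite !mxE; ring.
have e2 : xs - z = - (z - xs) by rewrite opprB.
have e3 : z - eta *: grad z p - y = (z - xs) - (y - xs) - eta *: grad z p.
  by apply/rowP => i; rewrite !mxE; ring.
have e4 : xs - y = - (y - xs) by rewrite opprB.
rewrite e1 in h1; rewrite e2 in h2; rewrite e3 e4 in h5.
set u := z - xs in h1 h2 h3 h4 h5 *; set v := y - xs in h1 h2 h3 h4 h5 *.
set g := grad z p in h1 h2 h5.
clearbody u v g.
rewrite !enorm2 in h1 h2 h3.
rewrite dot_sub dotvBr in h1.
rewrite ?dotvNl ?dotvNr ?opprK in h2.
rewrite dotvNr !dotvBl dotvZl in h5.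
have hQ := dotv_ge0 (v - u); rewrite dot_sub in hQ.
have hL : eta * L <= 1 by move: etaL; rewrite ler_pdivlMr // mulrC.
have h : lam / 2 * dotv v v <= dotv g v + L / 2 * (dotv v v - 2 * dotv v u + dotv u u)
          - lam / 2 * dotv u u by lra.
have hm := ler_wpM2l (ltW eta0) h.
have hLQ : 0 <= (1 - eta * L) * (dotv v v - 2 * dotv v u + dotv u u).
  by rewrite mulr_ge0 // subr_ge0.
rewrite (dotvC v u) in hm hLQ.
have key : (1 + eta * lam) * dotv v v <= (1 - eta * lam) * dotv u u.
lra.
have hpos : 0 < 1 + eta * lam by rewrite ltr_wpDr // mulr_ge0 // ltW.
apply: sqrt_bound; rewrite ?dotv_ge0 //.
rewrite -(ler_pM2l hpos).
have -> : (1 + eta * lam) * ((1 - 2 * lam * eta / (1 + eta * lam)) * dotv u u)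
   = (1 - eta * lam) * dotv u u by field; rewrite gt_eqF.
exact: key.
Qed.

Lemma step_pred {R : realType} {n m : nat} (X : set 'rV[R]_n) (Theta : set 'rV[R]_m)
  (proj : 'rV[R]_n -> 'rV[R]_n)
  (f : 'rV[R]_n -> 'rV[R]_m -> R) grad (L lam eta Cth C : R) p q xs z :
  is_convex_set X -> is_euclid_proj X proj -> 0 < L ->
  (forall x y p, X x -> X y -> Theta p ->
     f y p <= f x p + dotv (grad x p) (y - x) + L / 2 * enorm (y - x) ^+ 2) ->
  0 < lam -> (forall x y p, X x -> X y -> Theta p ->
     f x p + dotv (grad x p) (y - x) + lam / 2 * enorm (y - x) ^+ 2 <= f y p) ->
  (forall x p1 p2, X x -> Theta p1 -> Theta p2 ->
     enorm (grad x p1 - grad x p2) <= Cth * enorm (p1 - p2)) ->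
  0 < eta -> eta <= 1 / L -> C = Num.sqrt (1 - 2 * lam * eta / (1 + eta * lam)) ->
  Theta p -> Theta q -> X xs -> (forall x, X x -> f xs p <= f x p) -> X z ->
  enorm (pgd_step proj grad eta q z - xs)
    <= C * enorm (z - xs) + eta * Cth * enorm (p - q).
Proof.
move=> cX hP L0 A2 lam0 A3 A4 eta0 etaL hC Tp Tq Xxs hmin Xz.
rewrite /pgd_step.
set y' := proj _; set y := proj (z - eta *: grad z p).
have -> : y' - xs = (y' - y) + (y - xs) by apply/rowP => i; rewrite !mxE; ring.
apply: (le_trans (enorm_tri _ _)).
rewrite addrC; apply: lerD.
  by rewrite hC; apply: (contract _ _ _ f _ _ _ _ _ _ _ cX hP L0 A2 lam0 A3).
apply: (le_trans (proj_nonexp _ _ cX hP _ _)).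
have -> : z - eta *: grad z q - (z - eta *: grad z p) = eta *: (grad z p - grad z q).
  by apply/rowP => i; rewrite !mxE; ring.
rewrite enormZ ?(ltW eta0) // -mulrA ler_pM2l //.
exact: A4.
Qed.

Lemma iter_in {R : realType} {n m : nat} (X : set 'rV[R]_n)
  (proj : 'rV[R]_n -> 'rV[R]_n) (grad : 'rV[R]_n -> 'rV[R]_m -> 'rV[R]_n) eta q z j :
  is_euclid_proj X proj -> X z -> X (iter j (pgd_step proj grad eta q) z).
Proof. by move=> hP Xz; case: j => [|j] //=; rewrite /pgd_step; exact: (proj1 (hP _)). Qed.

Lemma iter_bound {R : realType} {n m : nat} (X : set 'rV[R]_n) (Theta : set 'rV[R]_m)
  (proj : 'rV[R]_n -> 'rV[R]_n)
  (f : 'rV[R]_n -> 'rV[R]_m -> R) grad (L lam eta Cth C : R) p q xs z j :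
  is_convex_set X -> is_euclid_proj X proj -> 0 < L ->
  (forall x y p, X x -> X y -> Theta p ->
     f y p <= f x p + dotv (grad x p) (y - x) + L / 2 * enorm (y - x) ^+ 2) ->
  0 < lam -> (forall x y p, X x -> X y -> Theta p ->
     f x p + dotv (grad x p) (y - x) + lam / 2 * enorm (y - x) ^+ 2 <= f y p) ->
  (forall x p1 p2, X x -> Theta p1 -> Theta p2 ->
     enorm (grad x p1 - grad x p2) <= Cth * enorm (p1 - p2)) ->
  0 < eta -> eta <= 1 / L -> C = Num.sqrt (1 - 2 * lam * eta / (1 + eta * lam)) ->
  C < 1 -> 
  Theta p -> Theta q -> X xs -> (forall x, X x -> f xs p <= f x p) -> X z ->
  enorm (iter j (pgd_step proj grad eta q) z - xs)
    <= C ^+ j * enorm (z - xs) + eta * Cth * enorm (p - q) * ((1 - C ^+ j) / (1 - C)).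
Proof.
move=> cX hP L0 A2 lam0 A3 A4 eta0 etaL hC C1 Tp Tq Xxs hmin Xz.
have C0 : 0 <= C by rewrite hC sqrtr_ge0.
have C1' : 0 < 1 - C by lra.
elim: j => [|j IH].
  by rewrite /= expr0 mul1r subrr mul0r mulr0 addr0.
rewrite iterS.
apply: (le_trans (step_pred _ _ _ f _ _ _ _ _ _ _ _ _ _ cX hP L0 A2 lam0 A3 A4 eta0 etaL hC Tp Tq Xxs hmin (iter_in _ _ _ _ _ _ _ hP Xz))).
set K := eta * Cth * enorm (p - q).
set d := enorm (iter j _ z - xs) in IH *.
have : C * d <= C * (C ^+ j * enorm (z - xs) + K * ((1 - C ^+ j) / (1 - C))).
  by rewrite ler_wpM2l.
suff -> : C ^+ j.+1 * enorm (z - xs) + K * ((1 - C ^+ j.+1) / (1 - C))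
  = C * (C ^+ j * enorm (z - xs) + K * ((1 - C ^+ j) / (1 - C))) + K by lra.
by rewrite exprS; field; rewrite gt_eqF.
Qed.
Theorem corollary1 (R : realType) (n m : nat)
  (X : set 'rV[R]_n) (Theta : set 'rV[R]_m)
  (proj : 'rV[R]_n -> 'rV[R]_n)
  (f : 'rV[R]_n -> 'rV[R]_m -> R) (grad : 'rV[R]_n -> 'rV[R]_m -> 'rV[R]_n)
  (G L lam Cth : R) (T k : nat) (th thhat : nat -> 'rV[R]_m)
  (eta : R) (x1 : 'rV[R]_n) (xstar : nat -> 'rV[R]_n) :
  X !=set0 -> closed X -> is_convex_set X ->
  is_euclid_proj X proj ->
  (forall p x, differentiable (fun y => f y p) x) ->
  (forall p x v, 'd (fun y => f y p) x v = dotv (grad x p) v) ->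
  (forall p x y (a : R), 0 <= a <= 1 ->
     f (a *: x + (1 - a) *: y) p <= a * f x p + (1 - a) * f y p) ->
  0 < G -> (forall x y p, X x -> X y -> Theta p ->
     `|f x p - f y p| <= G * enorm (x - y)) ->
  0 < L -> (forall x y p, X x -> X y -> Theta p ->
     f y p <= f x p + dotv (grad x p) (y - x) + L / 2 * enorm (y - x) ^+ 2) ->
  0 < lam -> (forall x y p, X x -> X y -> Theta p ->
     f x p + dotv (grad x p) (y - x) + lam / 2 * enorm (y - x) ^+ 2 <= f y p) ->
  0 < Cth -> (forall x p1 p2, X x -> Theta p1 -> Theta p2 ->
     enorm (grad x p1 - grad x p2) <= Cth * enorm (p1 - p2)) ->
  (forall t, (1 <= t <= T)%N -> Theta (th t)) ->
  (forall t, (2 <= t <= T)%N -> Theta (thhat t)) ->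
  (forall t, (1 <= t <= T)%N ->
     X (xstar t) /\ forall x, X x -> f (xstar t) (th t) <= f x (th t)) ->
  (1 <= k)%N -> 0 < eta -> X x1 -> eta <= 1 / L ->
  let x := iterates proj grad eta k thhat x1 in
  let C := Num.sqrt (1 - 2 * lam * eta / (1 + eta * lam)) in
  \sum_(1 <= t < T.+1) (f (x t) (th t) - f (xstar t) (th t))
  <= G * enorm (x1 - xstar 1%N) / (1 - C ^+ k)
     + G * C ^+ k / (1 - C ^+ k) * (\sum_(1 <= t < T) enorm (xstar t - xstar t.+1))
     + G * eta * Cth / (1 - C) * (\sum_(2 <= t < T.+1) enorm (th t - thhat t)).
Proof.
Proof.
move=> hne hcl cX hP _ _ _ G0 A1 L0 A2 lam0 A3 Cth0 A4 hth hthh hxs k1 eta0 Xx1 etaL.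
cbv zeta.
set x := iterates proj grad eta k thhat x1.
set C := Num.sqrt (1 - 2 * lam * eta / (1 + eta * lam)).
have hC : C = Num.sqrt (1 - 2 * lam * eta / (1 + eta * lam)) by [].
have C0 : 0 <= C by rewrite hC sqrtr_ge0.
have C1 : C < 1.
  have hc : 0 < 2 * lam * eta / (1 + eta * lam).
    by rewrite divr_gt0 ?mulr_gt0 // ltr_wpDr // mulr_ge0 // ltW.
  rewrite hC -[X in _ < X]sqrtr1 ltr_sqrt //; lra.
have Ck0 : 0 <= C ^+ k by rewrite exprn_ge0.
have Ck1 : C ^+ k < 1 by rewrite exprn_ilt1 // -lt0n.
have Xx : forall t, X (x t).
  elim=> [|[|t] IH] //.
  exact: (iter_in _ _ _ _ _ _ _ hP IH).
have xS : forall t, (1 <= t)%N ->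
    x t.+1 = iter k (pgd_step proj grad eta (thhat t.+1)) (x t).
  by case=> [|t].
set e := fun t => enorm (x t - xstar t).
set pp := fun t => enorm (xstar t - xstar t.+1).
set d := fun t => enorm (th t - thhat t).
set s := (1 - C ^+ k) / (1 - C).
have rec : forall t, (1 <= t < T)%N ->
    e t.+1 <= C ^+ k * (e t + pp t) + eta * Cth * d t.+1 * s.
  move=> t /andP[t1 tT].
  have r1 : (1 <= t.+1 <= T)%N by rewrite tT.
  have r0 : (1 <= t <= T)%N by rewrite t1 ltnW.
  have r2 : (2 <= t.+1 <= T)%N by rewrite tT ltnS t1.
  have [Xs1 hmin1] := hxs t.+1 r1.
  have Tp : Theta (th t.+1) by apply: hth.
  have Tq : Theta (thhat t.+1) by apply: hthh.
  rewrite /e xS //.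
  apply: (le_trans (iter_bound _ _ _ f _ _ _ _ _ _ _ _ _ _ _ cX hP L0 A2 lam0 A3 A4 eta0 etaL hC C1 Tp Tq Xs1 hmin1 (Xx t))).
  rewrite -/(d t.+1) -/s lerD2r ler_wpM2l //.
  have -> : x t - xstar t.+1 = (x t - xstar t) + (xstar t - xstar t.+1).
    by apply/rowP => i; rewrite !mxE; ring.
  exact: enorm_tri.
case: T hth hthh hxs rec => [|T'] hth hthh hxs rec.
  rewrite big_geq // big_geq // mulr0 addr0.
  rewrite big_geq // mulr0 addr0; apply: divr_ge0; last by lra.
  by apply: mulr_ge0; [exact: ltW | exact: enorm_ge0].
set S := \sum_(1 <= t < T'.+2) e t.
have hL : \sum_(1 <= t < T'.+2) (f (x t) (th t) - f (xstar t) (th t)) <= G * S.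
  rewrite /S mulr_sumr; apply: ler_sum_nat => t /andP[t1 tT].
  have [Xs _] := hxs t ltac:(by rewrite t1 -ltnS tT).
  apply: (le_trans (ler_norm _)); apply: A1 => //; apply: hth.
  by rewrite t1 -ltnS tT.
apply: (le_trans hL).
have eS : S = e 1%N + \sum_(1 <= t < T'.+1) e t.+1 by rewrite /S big_nat_recl.
have eS2 : S = \sum_(1 <= t < T'.+1) e t + e T'.+1 by rewrite /S big_nat_recr.
have eP : \sum_(2 <= t < T'.+2) enorm (th t - thhat t) = \sum_(1 <= t < T'.+1) d t.+1.
  by rewrite big_add1.
rewrite eP.
set P := \sum_(1 <= t < T'.+1) pp t.
set Pt := \sum_(1 <= t < T'.+1) d t.+1.
have hsum : \sum_(1 <= t < T'.+1) e t.+1 <=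
    C ^+ k * (\sum_(1 <= t < T'.+1) e t + P) + eta * Cth * s * Pt.
  rewrite /P /Pt -big_split /= !big_distrr -big_split /=.
  apply: ler_sum_nat => t ht; apply: (le_trans (rec t ht)).
  by rewrite mulrDr; lra.
have eT : 0 <= e T'.+1 by exact: enorm_ge0.
have key : (1 - C ^+ k) * S <= e 1%N + C ^+ k * P + eta * Cth * s * Pt.
  have : S <= e 1%N + C ^+ k * (S + P) + eta * Cth * s * Pt.
    have h2 : \sum_(1 <= t < T'.+1) e t <= S by rewrite eS2 lerDl.
    have h3 : C ^+ k * (\sum_(1 <= t < T'.+1) e t + P) <= C ^+ k * (S + P).
      by apply: ler_wpM2l => //; rewrite lerD2r.
    lra.
  lra.
have hCk : 0 < 1 - C ^+ k by lra.
have hC1 : 0 < 1 - C by lra.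
have -> : G * enorm (x1 - xstar 1%N) / (1 - C ^+ k) + G * C ^+ k / (1 - C ^+ k) * P +
   G * eta * Cth / (1 - C) * Pt
   = G * ((e 1%N + C ^+ k * P + eta * Cth * s * Pt) / (1 - C ^+ k)).
  rewrite /s /e /=; field.
  by rewrite !gt_eqF.
apply: ler_wpM2l; first exact: ltW.
by rewrite ler_pdivlMr // mulrC.
Qed.
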